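(* Let $S$ be a finite set of possibly partial distributions all with total mass $\textsc{Mass}(S)$, let $\textsc{OPT}_S$ be a minimum-entropy coupling of $S$, and let $\textsc{Major-Profile}_S$ be a minimum-entropy possibly partial distribution $d$ (of total mass $\textsc{Mass}(S)$) subject to $\textsc{Sketch}_d(x)\le\textsc{Profile}_S(x)$ for all $x\in(0,\textsc{Mass}(S)]$. Then $$H(\textsc{OPT}_S)\ge H(\textsc{Major-Profile}_S)\ge \max\Big(H(\textsc{Profile}_S),\,H\big(\textstyle\bigwedge S\big)\Big).$$
   Context: A possibly partial distribution $p$ is a vector of nonnegative reals sorted non-increasingly, $p(1)\ge p(2)\ge\cdots$, with total mass $\textsc{Mass}(p)=\sum_j p(j)\le1$; $H(p)=\sum_j p(j)\log_2(1/p(j))$. A coupling of $S=\{p_1,\dots,p_m\}$ is a nonnegative array $\mathcal C(i_1,\dots,i_m)$ whose sum over all tuples with $k$-th coordinate $i_k$ equals $p_k(i_k)$ for all $k,i_k$; $\textsc{OPT}_S$ minimizes entropy among couplings. $\textsc{Sketch}_p(x)=p(i)$ for $x\in(\sum_{j>i}p(j),\sum_{j\ge i}p(j)]$, defined on $(0,\textsc{Mass}(p)]$. $\textsc{Profile}_S(x)=\min_{p\in S}\textsc{Sketch}_p(x)$ and $H(\textsc{Profile}_S)=\int_0^{\textsc{Mass}(S)}\log_2(1/\textsc{Profile}_S(x))\,dx$. $\bigwedge S$ is the distribution defined by $\bigwedge S(i)=\min_{p\in S}\sum_{j=1}^i p(j)-\sum_{j=1}^{i-1}\bigwedge S(j)$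 (the greatest lower bound of $S$ in the majorization order). *)

(* Defs.v *)
From HB Require Import structures.
From mathcomp Require Import all_boot all_order all_algebra.
From mathcomp Require Import all_classical all_reals all_analysis.
Set Implicit Arguments. Unset Strict Implicit. Unset Printing Implicit Defensive.
Import Order.TTheory GRing.Theory Num.Theory.
Local Open Scope ring_scope.

Section Defs.
Variable R : realType.

Definition log2 (x : R) : R := ln x / ln 2.

(* A possibly partial distribution: finite list p(1) >= p(2) >= ... of
   nonnegative reals (0-indexed in Rocq), with total mass <= 1.
   Entries beyond the length of the list are 0. *)
Definition mass (p : seq R) : R := \sum_(x <- p) x.

Definition is_pdist (p : seq R) : Prop :=
  all (fun x => 0 <= x) p /\ sorted (fun x y => y <= x) p /\ mass p <= 1.

Definition entropy_seq (p : seq R) : R :=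
  \sum_(x <- p) (if x == 0 then 0 else x * log2 x^-1).

Definition tailmass (p : seq R) (i : nat) : R :=
  \sum_(i <= j < size p) p`_j.

(* Sketch_p(x) = p(i) for x in (sum_{j>i} p(j), sum_{j>=i} p(j)];
   these intervals are pairwise disjoint, so the sum selects the unique
   such i (and the value is 0 outside (0, Mass p]). *)
Definition Sketch (p : seq R) (x : R) : R :=
  \sum_(i < size p) (if (tailmass p i.+1 < x) && (x <= tailmass p i)
                     then p`_i else 0).

(* A finite set S of distributions, indexed by 'I_m.+1 (S nonempty). *)
Definition Profile (m : nat) (S : 'I_m.+1 -> seq R) (x : R) : R :=
  \big[Num.min/Sketch (S ord0) x]_(k < m.+1) Sketch (S k) x.

Definition entropy_profile (m : nat) (S : 'I_m.+1 -> seq R) (M : R) : \bar R :=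
  (\int[@lebesgue_measure R]_(x in `]0%R, M]%classic) (log2 (Profile S x)^-1)%:E)%E.

Definition maxsize (m : nat) (S : 'I_m.+1 -> seq R) : nat :=
  \max_(k < m.+1) size (S k).

(* sum_{j <= i} p(j) (1-indexed), i.e. first i.+1 entries, 0-indexed *)
Definition prefix (p : seq R) (n : nat) : R := \sum_(j < n) p`_j.

(* Greatest lower bound /\S, built by the defining recursion
   /\S(i) = min_{p in S} sum_{j<=i} p(j) - sum_{j<i} /\S(j). *)
Fixpoint meet_rec (m : nat) (S : 'I_m.+1 -> seq R) (n : nat) : seq R :=
  match n with
  | 0 => [::]
  | n'.+1 =>
      let s := meet_rec S n' in
      rcons s ((\big[Num.min/prefix (S ord0) n]_(k < m.+1) prefix (S k) n)
               - \sum_(y <- s) y)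
  end.

Definition meetS (m : nat) (S : 'I_m.+1 -> seq R) : seq R :=
  meet_rec S (maxsize S).

(* A coupling of S: a nonnegative array indexed by tuples
   (i_0, ..., i_m), each i_k < maxsize S (entries of p_k beyond its length
   are 0), whose k-th marginals are the p_k. *)
Definition tuple_idx (m : nat) (S : 'I_m.+1 -> seq R) : finType :=
  {ffun 'I_m.+1 -> 'I_(maxsize S)}.

Definition is_coupling (m : nat) (S : 'I_m.+1 -> seq R)
    (C : tuple_idx S -> R) : Prop :=
  (forall t, 0 <= C t) /\
  forall (k : 'I_m.+1) (i : 'I_(maxsize S)),
    \sum_(t : tuple_idx S | t k == i) C t = (S k)`_i.

Definition entropy_coupling (m : nat) (S : 'I_m.+1 -> seq R)
    (C : tuple_idx S -> R) : R :=
  \sum_(t : tuple_idx S) (if C t == 0 then 0 else C t * log2 (C t)^-1).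

Definition major_feasible (m : nat) (S : 'I_m.+1 -> seq R) (M : R)
    (d : seq R) : Prop :=
  is_pdist d /\ mass d = M /\
  forall x : R, 0 < x <= M -> Sketch d x <= Profile S x.

End Defs.

(* Main.v *)
Require Import Defs.
From HB Require Import structures.
From mathcomp Require Import all_boot all_order all_algebra.
From mathcomp Require Import all_classical all_reals all_analysis.
From mathcomp Require Import ring lra measurable_realfun.
Set Implicit Arguments. Unset Strict Implicit. Unset Printing Implicit Defensive.
Import Order.TTheory GRing.Theory Num.Theory.
Local Open Scope ring_scope.

Section S.
Variable R : realType.

Lemma ni_meas (a b : R) (f : R -> R) :
  (forall x y, a < x -> x <= y -> y <= b -> f y <= f x) -> measurable_fun `]a, b] f.
Proof.
move=> fni; apply: (measurability (@RGenCInfty.G R)) => [|/= _ [_] [r] -> <-].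
  exact: RGenCInfty.measurableE.
apply: is_interval_measurable => s t /= [].
rewrite !in_itv /= => /andP[ax sb] fs [] /andP[ay tb] ft u /andP[su ut].
split; first by rewrite in_itv /=; apply/andP; split; [exact: (lt_le_trans ax su)|exact: (le_trans ut tb)].
move: ft; rewrite /= !in_itv /= !andbT => ft.
apply: (le_trans ft); apply: fni => //; exact: (lt_le_trans ax su).
Qed.
End S.
Section S.
Variable R : realType.
Implicit Types p q : seq R.

Definition snn p := all (fun x => 0 <= x) p /\ sorted (fun x y => y <= x) p.

Lemma nth_ge0 p i : all (fun x => 0 <= x) p -> 0 <= p`_i.
Proof.
move=> /allP H; case: (ltnP i (size p)) => h; first by apply: H; rewrite mem_nth.
by rewrite nth_default.
Qed.

Lemma nth_mono p i j : snn p -> (i <= j)%N -> p`_j <= p`_i.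
Proof.
move=> [H0 Hs] ij; case: (ltnP j (size p)) => hj.
  have tr : transitive (fun x y : R => y <= x) by move=> a b c /= ba cb; exact: le_trans cb ba.
  have rf : reflexive (fun x y : R => y <= x) by move=> a /=.
  apply: (sorted_leq_nth tr rf 0 Hs) => //; rewrite inE //; exact: (leq_ltn_trans ij hj).
by rewrite (nth_default _ hj); exact: nth_ge0.
Qed.

Lemma tail_S p i : (i < size p)%N -> tailmass p i = p`_i + tailmass p i.+1.
Proof. by move=> h; rewrite /tailmass big_ltn. Qed.

Lemma tail_ge p i : (size p <= i)%N -> tailmass p i = 0.
Proof. by move=> h; rewrite /tailmass big_geq. Qed.

Lemma tail_ge0 p i : all (fun x => 0 <= x) p -> 0 <= tailmass p i.
Proof. by move=> H; rewrite /tailmass sumr_ge0 // => j _; exact: nth_ge0. Qed.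

Lemma tail_mono p i j : all (fun x => 0 <= x) p -> (i <= j)%N -> tailmass p j <= tailmass p i.
Proof.
move=> H ij; case: (leqP (size p) j) => hj; first by rewrite tail_ge // tail_ge0.
rewrite /tailmass [X in _ <= X](@big_cat_nat _ _ _ j) //=; last exact: ltnW.
by rewrite lerDr sumr_ge0 // => k _; exact: nth_ge0.
Qed.

Lemma tail0 p : tailmass p 0 = mass p.
Proof. by rewrite /mass (big_nth 0). Qed.

Lemma sketch_eq p j x : all (fun x => 0 <= x) p -> (j < size p)%N ->
  tailmass p j.+1 < x <= tailmass p j -> Sketch p x = p`_j.
Proof.
move=> H hj hx; rewrite /Sketch (bigD1 (Ordinal hj)) //= hx big1 ?addr0 // => i /= hi.
have hij : (val i != j) by apply: contra hi => /eqP e; apply/eqP/val_inj.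
case/andP: hx => h1 h2.
case: (ltngtP i j) hij => //= c _.
  have : tailmass p j <= tailmass p i.+1 by apply: tail_mono.
  by move=> h3; rewrite ltNge (le_trans h2 h3).
have : tailmass p i <= tailmass p j.+1 by apply: tail_mono.
by move=> h3; rewrite andbC leNgt (le_lt_trans h3 h1).
Qed.

Lemma sketch_ex p x : all (fun x => 0 <= x) p -> 0 < x <= tailmass p 0 ->
  exists2 j, (j < size p)%N & tailmass p j.+1 < x <= tailmass p j.
Proof.
move=> H /andP[x0 xT].
suff: forall N, tailmass p N < x -> exists2 j, (j < N)%N & tailmass p j.+1 < x <= tailmass p j.
  move=> /(_ (size p)); rewrite tail_ge // => /(_ x0) [j hj hh]; by exists j.
elim=> [|N IH] hN; first by move: (lt_le_trans hN xT); rewrite ltxx.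
case: (ltP (tailmass p N) x) => hx.
  by have [j hj hh] := IH hx; exists j => //; exact: ltnW.
by exists N => //; rewrite hN hx.
Qed.

Lemma sketch_pos p j x : all (fun x => 0 <= x) p -> (j < size p)%N ->
  tailmass p j.+1 < x <= tailmass p j -> 0 < p`_j.
Proof.
move=> H hj /andP[h1 h2]; have := tail_S hj; move=> e.
have: tailmass p j.+1 < tailmass p j := lt_le_trans h1 h2.
by rewrite e ltrDr.
Qed.

End S.
Section S3.
Variable R : realType.
Implicit Types p q : seq R.

Definition Lq p (v : R) := \sum_(0 <= j < size p) (if p`_j <= v then p`_j else 0).

Lemma char1 p x v : snn p -> 0 < x <= tailmass p 0 -> Sketch p x <= v -> x <= Lq p v.
Proof.
move=> [H0 Hs] hx; have [j hj hh] := sketch_ex H0 hx.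
rewrite (sketch_eq H0 hj hh) => pjv.
case/andP: hh => _ h2; apply: (le_trans h2).
rewrite /Lq (@big_cat_nat _ _ _ j) //=; last exact: ltnW.
rewrite /tailmass -[X in X <= _]add0r lerD //.
  by rewrite sumr_ge0 // => k _; case: ifP => // _; exact: nth_ge0.
apply: ler_sum_nat => k /andP[jk _].
by rewrite (le_trans (nth_mono (conj H0 Hs) jk) pjv).
Qed.

Lemma char2 p x v : snn p -> 0 < x <= tailmass p 0 -> x <= Lq p v -> Sketch p x <= v.
Proof.
move=> [H0 Hs] hx; have [j hj hh] := sketch_ex H0 hx.
rewrite (sketch_eq H0 hj hh) => xL; rewrite leNgt; apply/negP => vpj.
case/andP: hh => h1 _.
have : Lq p v <= tailmass p j.+1.
  rewrite /Lq (@big_cat_nat _ _ _ j.+1) //= big_nat_cond big1 ?add0r.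
    rewrite /tailmass ler_sum // => k _; case: ifP => // _; exact: nth_ge0.
  move=> k /andP[/andP[_ kj] _]; case: ifP => //.
  by move=> h; move: (lt_le_trans vpj (nth_mono (conj H0 Hs) (kj : (k <= j)%N))); rewrite ltNge h.
by move=> h; move: (le_lt_trans (le_trans xL h) h1); rewrite ltxx.
Qed.
End S3.
Section S4.
Variable R : realType.
Variables (m : nat) (S : 'I_m.+1 -> seq R).

Definition vals (C : tuple_idx S -> R) : seq R :=
  sort (fun x y => y <= x) [seq C t | t <- enum (tuple_idx S)].

Lemma sum_vals (C : tuple_idx S -> R) (F : R -> R) :
  \sum_(y <- vals C) F y = \sum_t F (C t).
Proof.
rewrite /vals (perm_big _ (permEl (perm_sort _ _))) big_map.
by rewrite -[RHS]big_enum.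
Qed.

Lemma size_le_max k : (size (S k) <= maxsize S)%N.
Proof. by rewrite /maxsize (leq_bigmax k). Qed.

Lemma sum_max (k : 'I_m.+1) (F : R -> R) : F 0 = 0 ->
  \sum_(i < maxsize S) F (S k)`_i = \sum_(0 <= j < size (S k)) F (S k)`_j.
Proof.
move=> F0; rewrite -(big_mkord xpredT (fun i => F (S k)`_i)).
rewrite (@big_cat_nat _ _ _ (size (S k))) //= ?size_le_max //.
rewrite [X in _ + X]big_nat_cond [X in _ + X]big1 ?addr0 // => j /andP[/andP[hj _] _].
by rewrite nth_default.
Qed.

Lemma marg_sum (C : tuple_idx S -> R) (hC : is_coupling C) (k : 'I_m.+1) (G : 'I_(maxsize S) -> R -> R) :
  \sum_(t : tuple_idx S) G (t k) (C t) = \sum_(i < maxsize S) \sum_(t : tuple_idx S | t k == i) G i (C t).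
Proof.
rewrite (partition_big (fun t : tuple_idx S => t k) xpredT) //=.
by apply: eq_bigr => i _; apply: eq_bigr => t /eqP ->.
Qed.

End S4.
Section S5.
Variable R : realType.
Variables (m : nat) (S : 'I_m.+1 -> seq R).

Lemma bigmin_ge (F : 'I_m.+1 -> R) (x0 z : R) : z <= x0 -> (forall k, z <= F k) ->
  z <= \big[Num.min/x0]_(k < m.+1) F k.
Proof.
move=> h0 hF; apply: (big_ind (fun y => z <= y)) => //.
by move=> a b ha hb; rewrite le_min ha hb.
Qed.

Lemma bigmin_le (F : 'I_m.+1 -> R) (x0 : R) k : \big[Num.min/x0]_(k < m.+1) F k <= F k.
Proof. by rewrite (bigD1 k) //= ge_min lexx. Qed.

Lemma bigmin_ex (F : 'I_m.+1 -> R) : exists k, \big[Num.min/F ord0]_(k < m.+1) F k = F k.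
Proof.
apply: (big_ind (fun y => exists k, y = F k)); first by exists ord0.
  move=> a b [i ->] [j ->]; case: (leP (F i) (F j)) => h.
    by exists i.
  by exists j.
by move=> i _; exists i.
Qed.

Lemma part1 (M : R) (hS : forall k, is_pdist (S k)) (hM : forall k, mass (S k) = M)
  (C : tuple_idx S -> R) (hC : is_coupling C) :
  major_feasible S M (vals C) /\ entropy_seq (vals C) = entropy_coupling C.
Proof.
have Cle : forall k t, C t <= (S k)`_(t k).
  move=> k t; rewrite -(hC.2 k (t k)) (bigD1 t) //= lerDl sumr_ge0 // => t' _; exact: hC.1.
have tot : \sum_t C t = M.
  rewrite -(hM ord0) (marg_sum hC ord0 (fun _ c => c)).
  under eq_bigr => i _ do rewrite (hC.2 ord0 i).
  by rewrite (sum_max S ord0 (F := id)) // -tail0.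
have nn : all (fun x => 0 <= x) (vals C).
  apply/allP => y; rewrite mem_sort => /mapP [t _ ->]; exact: hC.1.
have sv : snn (vals C).
  split => //; apply: sort_sorted => a b; exact: le_total.
have mv : mass (vals C) = M by rewrite /mass (sum_vals C id).
split; last by rewrite /entropy_seq sum_vals.
split; first by split => //; split; [exact: sv.2| rewrite mv -(hM ord0); exact: (hS ord0).2.2].
split => // x hx.
have key : forall k, Sketch (vals C) x <= Sketch (S k) x; last by apply: bigmin_ge.
move=> k; set v := Sketch (S k) x.
have hSk : snn (S k) by split; [exact: (hS k).1|exact: (hS k).2.1].
have hxk : 0 < x <= tailmass (S k) 0 by rewrite tail0 hM.
have hxv : 0 < x <= tailmass (vals C) 0 by rewrite tail0 mv.
apply: (char2 sv hxv); apply: (le_trans (char1 hSk hxk (lexx v))).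
rewrite /Lq -(sum_max S k (F := fun y => if y <= v then y else 0)); last by case: ifP.
rewrite -(big_nth 0 xpredT (fun y => if y <= v then y else 0)) sum_vals.
rewrite (eq_bigr (fun i : 'I_(maxsize S) => \sum_(t : tuple_idx S | t k == i) (if (S k)`_i <= v then C t else 0))); last first.
  by move=> i _; case: ifP => _; [rewrite (hC.2 k i)| rewrite big1].
rewrite -(marg_sum hC k (fun i c => if (S k)`_i <= v then c else 0)).
apply: ler_sum => t _; case: ifP => h; first by rewrite (le_trans (Cle k t) h).
by case: ifP => // _; exact: hC.1.
Qed.
End S5.
Section S6.
Variable R : realType.
Implicit Types p q : seq R.
Local Open Scope classical_set_scope.

Lemma entry_le_tail p j : all (fun x => 0 <= x) p -> p`_j <= tailmass p j.
Proof.
move=> H; case: (ltnP j (size p)) => hj; first by rewrite tail_S // lerDl tail_ge0.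
by rewrite nth_default // tail_ge0.
Qed.

Lemma sketch_in01 p x : snn p -> mass p <= 1 -> 0 < x <= tailmass p 0 -> 0 < Sketch p x <= 1.
Proof.
move=> [H0 Hs] m1 hx; have [j hj hh] := sketch_ex H0 hx.
rewrite (sketch_eq H0 hj hh) (sketch_pos H0 hj hh) /=.
apply: (le_trans (entry_le_tail j H0)); apply: (le_trans (tail_mono H0 (leq0n j))).
by rewrite tail0.
Qed.

Lemma sketch_mono p x y : snn p -> 0 < x -> x <= y -> y <= tailmass p 0 -> Sketch p x <= Sketch p y.
Proof.
move=> [H0 Hs] x0 xy yT.
have hx : 0 < x <= tailmass p 0 by rewrite x0 (le_trans xy yT).
have hy : 0 < y <= tailmass p 0 by rewrite (lt_le_trans x0 xy) yT.
have [i hi hhi] := sketch_ex H0 hx; have [j hj hhj] := sketch_ex H0 hy.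
rewrite (sketch_eq H0 hi hhi) (sketch_eq H0 hj hhj).
case: (leqP j i) => ji; first exact: nth_mono.
case/andP: hhi => h1 _; case/andP: hhj => _ h2.
have : tailmass p j <= tailmass p i.+1 by apply: tail_mono.
move=> h3; have := le_lt_trans (le_trans xy (le_trans h2 h3)) h1; by rewrite ltxx.
Qed.

Lemma meas_hsk p (h : R -> R) (a b : R) : snn p -> mass p <= 1 ->
  (forall s t, 0 < s -> s <= t -> t <= 1 -> h t <= h s) ->
  0 <= a -> b <= tailmass p 0 ->
  measurable_fun `]a, b] (fun x => (h (Sketch p x))%:E).
Proof.
move=> sp m1 hni a0 bT; apply/measurable_EFinP; apply: ni_meas => x y ax xy yb.
have x0 : 0 < x := le_lt_trans a0 ax.
have yT : y <= tailmass p 0 := le_trans yb bT.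
have hx : 0 < x <= tailmass p 0 by rewrite x0 (le_trans xy yT).
have hy : 0 < y <= tailmass p 0 by rewrite (lt_le_trans x0 xy) yT.
have /andP[sx0 _] := sketch_in01 sp m1 hx.
have /andP[_ sy1] := sketch_in01 sp m1 hy.
by apply: hni => //; apply: sketch_mono.
Qed.
End S6.
Section S7.
Variable R : realType.
Implicit Types p q : seq R.
Local Open Scope classical_set_scope.

Lemma int_sketch p (h : R -> R) n : snn p -> mass p <= 1 ->
  (forall s, 0 < s <= 1 -> 0 <= h s) ->
  (forall s t, 0 < s -> s <= t -> t <= 1 -> h t <= h s) -> (n <= size p)%N ->
  (\int[@lebesgue_measure R]_(x in `]tailmass p n, tailmass p 0]) (h (Sketch p x))%:E
    = (\sum_(j < n) p`_j * h p`_j)%:E)%E.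
Proof.
move=> sp m1 hpos hni; elim: n => [_|n IH hn].
  by rewrite set_itvoc0 integral_set0 big_ord0.
have H0 := sp.1.
have Tn := tail_S hn.
have eU : `]tailmass p n.+1, tailmass p 0] = `]tailmass p n.+1, tailmass p n] `|` `]tailmass p n, tailmass p 0].
  by apply: itv_bndbnd_setU; rewrite bnd_simp; apply: tail_mono.
rewrite eU ge0_integral_setU //; rewrite -?eU; last 3 first.
- by apply: meas_hsk => //; apply: tail_ge0.
- move=> x; rewrite /= in_itv /= => /andP[h1 h2]; rewrite lee_fin; apply: hpos; apply: sketch_in01 => //.
  by rewrite h2 (le_lt_trans (tail_ge0 _ H0) h1).
- rewrite /disj_set; apply/eqP/seteqP; split => x //=; rewrite !in_itv /= => -[/andP[_ h1] /andP[h2 _]].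
  by move: (le_lt_trans h1 h2); rewrite ltxx.
rewrite IH ?(ltnW hn) // big_ord_recr /= EFinD addeC; congr (_ + _)%E.
transitivity (\int[@lebesgue_measure R]_(x in `]tailmass p n.+1, tailmass p n]) (cst (h p`_n)%:E) x)%E.
  apply: eq_integral => x; rewrite inE /= in_itv /= => hx; congr (_%:E); congr h; exact: sketch_eq.
rewrite integral_cst //= lebesgue_measure_itv /= lte_fin.
case: ifP => hlt.
  by rewrite -EFinD -EFinM Tn addrK mulrC.
move/negbT: hlt; rewrite Tn ltrDr -leNgt => pn0.
have -> : p`_n = 0 by apply/eqP; rewrite eq_le pn0 nth_ge0.
by rewrite mule0 mul0r.
Qed.
End S7.
Section S8.
Variable R : realType.
Variables (m : nat) (S : 'I_m.+1 -> seq R).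
Local Open Scope classical_set_scope.

Lemma ln2_gt0 : 0 < ln (2 : R).
Proof. by apply: ln_gt0; rewrite ltr1n. Qed.

Lemma log2inv_ge0 (s : R) : 0 < s <= 1 -> 0 <= log2 s^-1.
Proof.
move=> /andP[s0 s1]; rewrite /log2 divr_ge0 ?ln_ge0 ?(ltW ln2_gt0) //.
  by rewrite invf_ge1.
by rewrite ler1n.
Qed.

Lemma log2inv_mono (s t : R) : 0 < s -> s <= t -> log2 t^-1 <= log2 s^-1.
Proof.
move=> s0 st; have t0 := lt_le_trans s0 st.
rewrite /log2 ler_pM2r ?invr_gt0 ?ln2_gt0 // ler_ln ?posrE ?invr_gt0 //.
by rewrite lef_pV2.
Qed.

Lemma snn_pdist (p : seq R) : is_pdist p -> snn p.
Proof. by case=> a [b _]; split. Qed.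

Lemma profile_in01 (M : R) (hS : forall k, is_pdist (S k)) (hM : forall k, mass (S k) = M) x :
  0 < x <= M -> 0 < Profile S x <= 1.
Proof.
move=> hx; rewrite /Profile; have [k ->] := bigmin_ex (fun k => Sketch (S k) x).
by apply: sketch_in01; [exact: snn_pdist|exact: (hS k).2.2|rewrite tail0 hM].
Qed.

Lemma profile_mono (M : R) (hS : forall k, is_pdist (S k)) (hM : forall k, mass (S k) = M) x y :
  0 < x -> x <= y -> y <= M -> Profile S x <= Profile S y.
Proof.
move=> x0 xy yM; apply: bigmin_ge => [|k]; apply: (le_trans (bigmin_le _ _ _)).
all: apply: sketch_mono => //; [exact: snn_pdist| by rewrite tail0 hM].
Qed.

Lemma entropy_sum (p : seq R) : entropy_seq p = \sum_(j < size p) p`_j * log2 (p`_j)^-1.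
Proof.
rewrite /entropy_seq (big_nth 0) big_mkord; apply: eq_bigr => j _.
by case: eqP => // ->; rewrite mul0r.
Qed.

Lemma part2 (M : R) (hS : forall k, is_pdist (S k)) (hM : forall k, mass (S k) = M)
  (MP : seq R) (hMP : major_feasible S M MP) :
  (entropy_profile S M <= (entropy_seq MP)%:E)%E.
Proof.
case: hMP => pd [mMP hsk].
have sp := snn_pdist pd.
have T0 : tailmass MP 0 = M by rewrite tail0.
rewrite entropy_sum -(@int_sketch _ MP (fun s => log2 s^-1)) //; last 3 first.
- exact: pd.2.2.
- exact: log2inv_ge0.
- by move=> s t s0 st _; apply: log2inv_mono.
rewrite tail_ge // T0 /entropy_profile.
have := @ge0_le_integral _ _ _ (@lebesgue_measure R) `]0%R, M] (measurable_itv _) (fun x => (log2 (Profile S x)^-1)%:E) (fun x => (log2 (Sketch MP x)^-1)%:E).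
apply.
- move=> x; rewrite /= in_itv /= => hx; rewrite lee_fin; apply: log2inv_ge0.
  exact: (profile_in01 hS hM hx).
- apply/measurable_EFinP; apply: ni_meas => x y x0 xy yM.
  have /andP[p0 _] := profile_in01 hS hM (x := x) (ltac:(by rewrite x0 (le_trans xy yM))).
  by apply: log2inv_mono => //; apply: (profile_mono hS hM).
- apply: (meas_hsk (h := fun s => log2 s^-1)) => //; [exact: pd.2.2| | by rewrite T0].
  by move=> s t s0 st _; apply: log2inv_mono.
- move=> x; rewrite /= in_itv /= => hx.
  have /andP[s0 _] := sketch_in01 sp pd.2.2 (x := x) (ltac:(by rewrite T0)).
  by rewrite lee_fin; apply: log2inv_mono => //; apply: hsk.
Qed.
End S8.
Section Kar.
Variable R : realType.
Implicit Types x y u v : R.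

Definition gg x : R := x * ln x^-1.
Definition gd x : R := - ln x - 1.
Definition cs u v : R := if u == v then (if u == 0 then 0 else gd u) else (gg v - gg u) / (v - u).

Lemma gg0 : gg 0 = 0. Proof. by rewrite /gg mul0r. Qed.

Lemma ggE x : 0 < x -> gg x = - (x * ln x).
Proof. by move=> x0; rewrite /gg lnV ?posrE // mulrN. Qed.

Lemma ln_le_sub1 x : 0 < x -> ln x <= x - 1.
Proof. by move=> x0; have := expR_ge1Dx (ln x); rewrite lnK ?posrE //; lra. Qed.

Lemma tangent x y : 0 < x -> 0 <= y -> gg y <= gg x + gd x * (y - x).
Proof.
move=> x0; rewrite le_eqVlt => /orP[/eqP <-|y0].
  rewrite gg0 ggE // /gd; lra.
rewrite !ggE // /gd.
have h := ln_le_sub1 (divr_gt0 x0 y0).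
rewrite lnM ?posrE ?invr_gt0 // lnV ?posrE // in h.
have e : y * (x / y - 1) = x - y by field; rewrite gt_eqF.
have : y * (ln x - ln y) <= y * (x / y - 1) by rewrite ler_pM2l //; lra.
rewrite e => h2; nra.
Qed.

Lemma csE u v : u != v -> cs u v = (gg v - gg u) / (v - u).
Proof. by rewrite /cs => /negbTE ->. Qed.

Lemma csK u v : cs u v * (v - u) = gg v - gg u.
Proof.
rewrite /cs; case: eqP => [->|/eqP h]; first by rewrite !subrr mulr0.
by rewrite divfK // subr_eq0 eq_sym.
Qed.

Lemma csC u v : cs u v = cs v u.
Proof.
rewrite /cs eq_sym; case: eqP => [->//|_].
by rewrite -mulrNN -invrN !opprB.
Qed.

Lemma S1a x y : 0 <= x -> x < y -> gd y <= cs x y.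
Proof.
move=> x0 xy; rewrite csE ?lt_eqF // ler_pdivlMr ?subr_gt0 //.
have := tangent (le_lt_trans x0 xy) x0; nra.
Qed.

Lemma S1b x y : 0 < x -> x < y -> cs x y <= gd x.
Proof.
move=> x0 xy; rewrite csE ?lt_eqF // ler_pdivrMr ?subr_gt0 //.
have := tangent x0 (ltW (lt_trans x0 xy)); nra.
Qed.

Lemma csxx u : u != 0 -> cs u u = gd u.
Proof. by rewrite /cs eqxx => /negbTE ->. Qed.

Lemma M2 u v v' : 0 <= u -> 0 <= v' -> v' <= v -> (u != 0) || (v' != 0) -> cs u v <= cs u v'.
Proof.
move=> u0 v0 vv nz; case: (ltgtP v' v) vv => // [vlt|->] _; last by [].
case: (ltgtP u v') => uv.
- have A := csK u v; have B := csK u v'; have Cc := csK v' v.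
  have h1 := S1b (le_lt_trans u0 uv) vlt; have h2 := S1a u0 uv.
  have vu : 0 < v - u by rewrite subr_gt0 (lt_trans uv vlt).
  have : (cs u v - cs u v') * (v - u) <= 0 by nra.
  by rewrite pmulr_lle0 // subr_le0.
- have u0' : 0 < u by apply: le_lt_trans uv.
  rewrite [cs u v']csC; case: (ltgtP u v) => uv2.
  + exact: le_trans (S1b u0' uv2) (S1a v0 uv).
  + rewrite [cs u v]csC.
    have A := csK v u; have B := csK v' u; have Cc := csK v' v.
    have h1 := S1a v0 vlt; have h2 := S1b (le_lt_trans v0 vlt) uv2.
    have uv' : 0 < u - v' by rewrite subr_gt0.
    have : (cs v u - cs v' u) * (u - v') <= 0 by nra.
    by rewrite pmulr_lle0 // subr_le0.
  + by rewrite -uv2 csxx ?gt_eqF //; apply: S1a.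
- have un : u != 0 by move: nz; rewrite -uv orbb.
  rewrite -uv csxx //; apply: S1b; [by rewrite lt_neqAle eq_sym un | by rewrite uv].
Qed.

Lemma Mmono u v u' v' : 0 <= u' -> u' <= u -> 0 <= v' -> v' <= v ->
  (u' != 0) || (v' != 0) -> cs u v <= cs u' v'.
Proof.
move=> u0 uu v0 vv nz.
have nz1 : (u != 0) || (v' != 0).
  case/orP: nz => h; last by rewrite h orbT.
  by rewrite gt_eqF // (lt_le_trans _ uu) // lt_neqAle eq_sym h.
apply: (le_trans (M2 (le_trans u0 uu) v0 vv nz1)).
rewrite csC [cs u' v']csC; apply: M2 => //; by rewrite orbC.
Qed.
Lemma abel (c d : nat -> R) N : \sum_(i < N.+1) c i * d i =
  c N * \sum_(i < N.+1) d i - \sum_(i < N) (\sum_(j < i.+1) d j) * (c i.+1 - c i).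
Proof.
elim: N => [|N IH]; first by rewrite !big_ord1 big_ord0 subr0.
rewrite big_ord_recr /= IH [\sum_(i < N.+2) d i]big_ord_recr [\sum_(i < N.+1) _ * _]big_ord_recr /=.
ring.
Qed.

Lemma karamata (a b : nat -> R) N : (forall i, 0 <= a i) -> (forall i, 0 <= b i) ->
  (forall i j, (i <= j)%N -> a j <= a i) -> (forall i j, (i <= j)%N -> b j <= b i) ->
  (forall n, (n <= N)%N -> \sum_(i < n) b i <= \sum_(i < n) a i) ->
  \sum_(i < N) b i = \sum_(i < N) a i ->
  \sum_(i < N) gg (a i) <= \sum_(i < N) gg (b i).
Proof.
move=> a0 b0 am bm pre tot; case: N pre tot => [|N] pre tot; first by rewrite !big_ord0.
rewrite -subr_ge0 -sumrB.
rewrite (eq_bigr (fun i : 'I_N.+1 => cs (a i) (b i) * (b i - a i))); last by move=> i _; rewrite csK.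
rewrite (abel (fun i => cs (a i) (b i)) (fun i => b i - a i)) sumrB tot subrr mulr0 sub0r oppr_ge0.
apply: sumr_le0 => i _.
have Dle : \sum_(j < i.+1) (b j - a j) <= 0.
  by rewrite sumrB subr_le0; apply: pre; rewrite ltnS ltnW.
case: (ltrgt0P (\sum_(j < i.+1) (b j - a j))) Dle => // [Dlt _|->]; last by rewrite mul0r.
rewrite nmulr_rle0 // subr_ge0.
apply: Mmono; rewrite ?a0 ?b0 ?am ?bm //.
rewrite -negb_and; apply/negP => /andP[/eqP ha /eqP hb].
have : \sum_(j < N.+1) (b j - a j) = \sum_(j < i.+1) (b j - a j).
  rewrite -!(big_mkord xpredT (fun j => b j - a j)) (@big_cat_nat _ _ _ i.+1) //=; last by rewrite ltnS ltnW.
  rewrite [X in _ + X]big_nat_cond [X in _ + X]big1 ?addr0 // => j /andP[/andP[ij _] _].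
  have : a j = 0 by apply/eqP; rewrite eq_le a0 andbT -ha am.
  have : b j = 0 by apply/eqP; rewrite eq_le b0 andbT -hb bm.
  by move=> -> ->; rewrite subrr.
by rewrite sumrB tot subrr => /esym h; move: Dlt; rewrite h ltxx.
Qed.
End Kar.
Section S10.
Variable R : realType.
Implicit Types p q : seq R.
Local Open Scope classical_set_scope.

Lemma inv_pos (s : R) : 0 < s <= 1 -> 0 <= s^-1.
Proof. by case/andP => s0 _; rewrite invr_ge0 ltW. Qed.

Lemma inv_ni (s t : R) : 0 < s -> s <= t -> t <= 1 -> t^-1 <= s^-1.
Proof. by move=> s0 st _; rewrite lef_pV2 ?posrE // (lt_le_trans s0 st). Qed.

Lemma cmp_tail p q (M : R) : snn p -> snn q -> mass p = M -> mass q = M -> M <= 1 ->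
  (forall x, 0 < x <= M -> Sketch q x <= Sketch p x) -> forall n, tailmass p n <= tailmass q n.
Proof.
move=> sp sq mp mq M1 hsk n; rewrite leNgt; apply/negP => lt.
have Hp := sp.1; have Hq := sq.1.
set a := tailmass q n in lt.
have a0 : 0 <= a by apply: tail_ge0.
have Tp0 : tailmass p 0 = M by rewrite tail0.
have Tq0 : tailmass q 0 = M by rewrite tail0.
have mp1 : mass p <= 1 by rewrite mp.
have mq1 : mass q <= 1 by rewrite mq.
have hn : (n < size p)%N.
  rewrite ltnNge; apply/negP => h; move: (le_lt_trans a0 lt); by rewrite tail_ge // ltxx.
have pn : 0 < p`_n.
  rewrite lt_neqAle nth_ge0 // andbT; apply/negP => /eqP pn0.
  have : tailmass p n <= 0.
    rewrite /tailmass big_nat_cond; apply: sumr_le0 => j /andP[/andP[nj _] _].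
    by have := nth_mono sp nj; rewrite -pn0.
  by move=> h; move: (le_lt_trans a0 (lt_le_trans lt h)); rewrite ltxx.
have TpM : tailmass p n <= M by rewrite -Tp0 tail_mono.
have aM : a <= M := le_trans (ltW lt) TpM.
have Iq : (\int[@lebesgue_measure R]_(x in `]a, M]) ((Sketch q x)^-1)%:E <= (n%:R)%:E)%E.
  have [n' [Tn' hn']] : exists n', tailmass q n' = a /\ (n' <= size q)%N /\ (n' <= n)%N.
    case: (leqP n (size q)) => h; first by exists n.
    exists (size q); split; first by rewrite /a !tail_ge // ltnW.
    by split => //; exact: ltnW.
  case: hn' => hn'1 hn'2.
  rewrite -Tn' -Tq0 (@int_sketch _ q (fun s => s^-1)) //; last 2 first.
    exact: inv_pos. exact: inv_ni.
  rewrite lee_fin; apply: (@le_trans _ _ (\sum_(j < n') 1)).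
    apply: ler_sum => j _; case: (eqVneq q`_j 0) => [->|h]; first by rewrite mul0r.
    by rewrite mulfV.
  by rewrite sumr_const card_ord ler_nat.
have Ip2 : (\int[@lebesgue_measure R]_(x in `]tailmass p n, M]) ((Sketch p x)^-1)%:E = (n%:R)%:E)%E.
  rewrite -{1}Tp0 (@int_sketch _ p (fun s => s^-1)) //; last 3 first.
    exact: inv_pos. exact: inv_ni. exact: ltnW.
  congr (_%:E); rewrite -[n in RHS]card_ord -sumr_const; apply: eq_bigr => j _.
  by rewrite mulfV // gt_eqF // (lt_le_trans pn) // nth_mono // ltnW.
have Ip1 : ((tailmass p n - a)%:E <= \int[@lebesgue_measure R]_(x in `]a, tailmass p n]) ((Sketch p x)^-1)%:E)%E.
  have e1 : (\int[@lebesgue_measure R]_(x in `]a, tailmass p n]) (cst 1%E) x = (tailmass p n - a)%:E)%E.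
    by rewrite integral_cst //= lebesgue_measure_itv /= lte_fin lt mul1e -EFinD.
  rewrite -e1.
  apply: ge0_le_integral.
  - exact: measurable_itv.
  - by move=> x _; rewrite /= lee_fin.
  - exact: measurable_cst.
  - apply: (meas_hsk (h := fun s => s^-1)) => //; [exact: inv_ni| by rewrite Tp0].
  - move=> x; rewrite /= in_itv /= => /andP[ax xT].
    have /andP[s0 s1] := sketch_in01 sp mp1 (x := x) (ltac:(by rewrite (le_lt_trans a0 ax) Tp0 (le_trans xT TpM))).
    by rewrite lee_fin invf_ge1.
have eU : `]a, M] = `]a, tailmass p n] `|` `]tailmass p n, M].
  by apply: itv_bndbnd_setU; rewrite bnd_simp // ltW.
have Ip : ((tailmass p n - a)%:E + (n%:R)%:E <= \int[@lebesgue_measure R]_(x in `]a, M]) ((Sketch p x)^-1)%:E)%E.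
  rewrite eU ge0_integral_setU //; rewrite -?eU; last 3 first.
  - apply: (meas_hsk (h := fun s => s^-1)) => //; [exact: inv_ni| by rewrite Tp0].
  - move=> x; rewrite /= in_itv /= => /andP[h1 h2]; rewrite lee_fin; apply: inv_pos; apply: sketch_in01 => //.
    by rewrite Tp0 h2 (le_lt_trans a0 h1).
  - rewrite /disj_set; apply/eqP/seteqP; split => x //=; rewrite !in_itv /= => -[/andP[_ h1] /andP[h2 _]].
    by move: (le_lt_trans h1 h2); rewrite ltxx.
  by rewrite Ip2; apply: leeD.
have Ipq : (\int[@lebesgue_measure R]_(x in `]a, M]) ((Sketch p x)^-1)%:E <=
            \int[@lebesgue_measure R]_(x in `]a, M]) ((Sketch q x)^-1)%:E)%E.
  apply: ge0_le_integral => //.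
  - move=> x; rewrite /= in_itv /= => /andP[h1 h2]; rewrite lee_fin; apply: inv_pos; apply: sketch_in01 => //.
    by rewrite Tp0 h2 (le_lt_trans a0 h1).
  - apply: (meas_hsk (h := fun s => s^-1)) => //; [exact: inv_ni| by rewrite Tp0].
  - apply: (meas_hsk (h := fun s => s^-1)) => //; [exact: inv_ni| by rewrite Tq0].
  - move=> x; rewrite /= in_itv /= => /andP[h1 h2].
    have hx : 0 < x <= M by rewrite h2 (le_lt_trans a0 h1).
    have /andP[s0 _] := sketch_in01 sq mq1 (x := x) (ltac:(by rewrite Tq0)).
    by rewrite lee_fin; apply: inv_ni => //; [exact: hsk | case/andP: (sketch_in01 sp mp1 (x := x) (ltac:(by rewrite Tp0)))].
have := le_trans Ip (le_trans Ipq Iq).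
rewrite -EFinD lee_fin; lra.
Qed.
End S10.
Section S11.
Variable R : realType.
Variables (m : nat) (S : 'I_m.+1 -> seq R).

Lemma prefix_tail (p : seq R) n : Defs.prefix p n + tailmass p n = mass p.
Proof.
rewrite -tail0 /Defs.prefix /tailmass -(big_mkord xpredT (fun j => p`_j)).
case: (leqP n (size p)) => h; first by rewrite -big_cat_nat.
rewrite [X in _ + X]big_geq ?addr0; last exact: ltnW.
rewrite [X in X = _](@big_cat_nat _ _ _ (size p)) //=; last exact: ltnW.
rewrite [X in _ + X]big_nat_cond [X in _ + X]big1 ?addr0 // => j /andP[/andP[hj _] _].
by rewrite nth_default.
Qed.

Lemma prefixS (p : seq R) n : Defs.prefix p n.+1 = Defs.prefix p n + p`_n.
Proof. by rewrite /Defs.prefix big_ord_recr. Qed.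

Definition mm n := \big[Num.min/Defs.prefix (S ord0) n]_(k < m.+1) Defs.prefix (S k) n.

Lemma mm0 : mm 0 = 0.
Proof. by rewrite /mm; have [k ->] := bigmin_ex (fun k => Defs.prefix (S k) 0); rewrite /Defs.prefix big_ord0. Qed.

Lemma meet_size n : size (meet_rec S n) = n.
Proof. by elim: n => //= n IH; rewrite size_rcons IH. Qed.

Lemma meet_sum n : \sum_(y <- meet_rec S n) y = mm n.
Proof.
elim: n => [|n IH]; first by rewrite big_nil mm0.
rewrite /= -cats1 big_cat big_seq1 IH /=. rewrite -/(mm n.+1). by rewrite addrC subrK.
Qed.

Lemma meet_nth n i : (i < n)%N -> nth 0 (meet_rec S n) i = mm i.+1 - mm i.
Proof.
elim: n => // n IH; rewrite ltnS leq_eqVlt => /orP[/eqP ->|h] /=.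
  by rewrite nth_rcons meet_size ltnn eqxx meet_sum.
by rewrite nth_rcons meet_size h IH.
Qed.

Lemma mm_stable i : (maxsize S <= i)%N -> mm i.+1 = mm i.
Proof.
move=> h; have e : forall k, Defs.prefix (S k) i.+1 = Defs.prefix (S k) i.
  move=> k; rewrite prefixS nth_default ?addr0 //; exact: leq_trans (size_le_max S k) h.
by rewrite /mm e; apply: eq_bigr => k _; rewrite e.
Qed.

Lemma meetS_nth i : (meetS S)`_i = mm i.+1 - mm i.
Proof.
case: (ltnP i (maxsize S)) => h; first exact: meet_nth.
by rewrite nth_default ?meet_size // mm_stable // subrr.
Qed.

Lemma meetS_prefix n : \sum_(i < n) (meetS S)`_i = mm n.
Proof.
rewrite (eq_bigr (fun i : 'I_n => mm i.+1 - mm i)); last by move=> i _; rewrite meetS_nth.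
by rewrite -(big_mkord xpredT (fun i => mm i.+1 - mm i)) telescope_sumr // mm0 subr0.
Qed.

Hypothesis hS : forall k, is_pdist (S k).

Lemma prefix_mono k n : Defs.prefix (S k) n <= Defs.prefix (S k) n.+1.
Proof. by rewrite prefixS lerDl nth_ge0 //; exact: (hS k).1. Qed.

Lemma mm_mono i : mm i <= mm i.+1.
Proof.
apply: bigmin_ge => [|k]; [apply: (le_trans (bigmin_le _ _ ord0)) | apply: (le_trans (bigmin_le _ _ k))]; exact: prefix_mono.
Qed.

Lemma mm_conc i : mm i.+2 - mm i.+1 <= mm i.+1 - mm i.
Proof.
have [k ek] := bigmin_ex (fun k => Defs.prefix (S k) i.+1).
rewrite -/(mm i.+1) in ek.
have h1 : mm i.+2 <= Defs.prefix (S k) i.+2 := bigmin_le _ _ k.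
have h2 : mm i <= Defs.prefix (S k) i := bigmin_le _ _ k.
have h3 : (S k)`_i.+1 <= (S k)`_i.
  by apply: nth_mono => //; apply: snn_pdist.
move: h1 h2; rewrite ek !prefixS; lra.
Qed.

Lemma meetS_ge0 i : 0 <= (meetS S)`_i.
Proof. by rewrite meetS_nth subr_ge0 mm_mono. Qed.

Lemma meetS_mono i j : (i <= j)%N -> (meetS S)`_j <= (meetS S)`_i.
Proof.
move=> /subnK <-; elim: (j - i)%N => // d IH.
by rewrite addSn !meetS_nth; apply: le_trans (mm_conc _) _; rewrite -!meetS_nth.
Qed.

End S11.
Section S12.
Variable R : realType.

Lemma ent_N (s : seq R) N : (size s <= N)%N -> entropy_seq s = (\sum_(i < N) gg s`_i) / ln 2.
Proof.
move=> hN; rewrite entropy_sum mulr_suml.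
rewrite -(big_mkord xpredT (fun i => s`_i * log2 (s`_i)^-1)).
rewrite -(big_mkord xpredT (fun i => gg s`_i / ln 2)).
rewrite [RHS](@big_cat_nat _ _ _ (size s)) //=.
rewrite [X in _ = _ + X]big_nat_cond [X in _ = _ + X]big1 ?addr0.
  by apply: eq_bigr => i _; rewrite /gg /log2 mulrA.
by move=> j /andP[/andP[hj _] _]; rewrite nth_default // gg0 mul0r.
Qed.

Lemma part3 (m : nat) (S : 'I_m.+1 -> seq R) (M : R) (hS : forall k, is_pdist (S k))
  (hM : forall k, mass (S k) = M) (MP : seq R) (hMP : major_feasible S M MP) :
  entropy_seq (meetS S) <= entropy_seq MP.
Proof.
case: hMP => pd [mMP hsk].
have sMP := snn_pdist pd.
have M1 : M <= 1 by rewrite -(hM ord0); exact: (hS ord0).2.2.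
set N := (maxsize S + size MP)%N.
rewrite (ent_N (N := N)); last by rewrite /meetS meet_size leq_addr.
rewrite (ent_N (s := MP) (N := N)); last by rewrite leq_addl.
rewrite ler_pM2r ?invr_gt0 ?ln2_gt0 //.
have pk : forall k n, Defs.prefix MP n <= Defs.prefix (S k) n.
  move=> k n.
  have hsk' : forall x, 0 < x <= M -> Sketch MP x <= Sketch (S k) x.
    move=> x hx; apply: (le_trans (hsk x hx)); exact: bigmin_le.
  have := @cmp_tail _ (S k) MP M (snn_pdist (hS k)) sMP (hM k) mMP M1 hsk' n.
  have := prefix_tail MP n; have := prefix_tail (S k) n; rewrite mMP hM.
  lra.
apply: karamata.
- exact: meetS_ge0.
- move=> i; exact: nth_ge0 pd.1.
- exact: meetS_mono.
- move=> i j ij; exact: nth_mono.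
- move=> n _; rewrite meetS_prefix; apply: bigmin_ge => [|k]; [exact: (pk ord0 n)| exact: (pk k n)].
- rewrite meetS_prefix.
  have -> : \sum_(i < N) MP`_i = M.
    have := prefix_tail MP N; rewrite tail_ge ?addr0 ?mMP //; by rewrite leq_addl.
  rewrite /mm; have [k ->] := bigmin_ex (fun k => Defs.prefix (S k) N).
  have := prefix_tail (S k) N; rewrite tail_ge ?addr0 ?hM //.
  exact: leq_trans (size_le_max S k) (leq_addr _ _).
Qed.
End S12.

Unset Implicit Arguments.
Set Strict Implicit.

Theorem theorem4 (R : realType) (m : nat) (S : 'I_m.+1 -> seq R) (M : R)
  (hS : forall k, is_pdist (S k))
  (hM : forall k, mass (S k) = M)
  (OPT : tuple_idx S -> R)
  (hOPT : is_coupling OPT)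
  (hOPTmin : forall C : tuple_idx S -> R, is_coupling C ->
               entropy_coupling OPT <= entropy_coupling C)
  (MP : seq R)
  (hMP : major_feasible S M MP)
  (hMPmin : forall d : seq R, major_feasible S M d -> entropy_seq MP <= entropy_seq d) :
  entropy_seq MP <= entropy_coupling OPT /\
  (maxe (entropy_profile S M) (entropy_seq (meetS S))%:E <= (entropy_seq MP)%:E)%E.
Proof.
split.
  have [mf ent] := part1 hS hM hOPT.
  by rewrite -ent; apply: hMPmin.
rewrite ge_max; apply/andP; split; first exact: part2.
by rewrite lee_fin; apply: part3.
Qed.
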